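(* In the baseline diffusion model described in the context, once an individual consumes the new product he consumes it in every later period: for every $t\ge 1$, $D_n^{t-1}\subseteq D_n^{t}$. Equivalently, if $i\in D_n^{t}$ then $i\in D_n^{t'}$ for all $t'\ge t$.
   Context: Baseline diffusion model. There are $N\ge 2$ individuals $i\in\{1,\dots,N\}$ and two products, an incumbent $p_c$ and a new product $p_n$. The individuals are partitioned into $G\ge 2$ nonempty groups $N_1,\dots,N_G$ (the symbol $N_k$ also denotes the group's cardinality). Every member of group $N_k$ has the same aspiration level $H_{N_k}$, and $H_{N_1}>H_{N_2}>\cdots>H_{N_G}$; write $H_i$ for the aspiration level of individual $i$. Consuming $p_c$ gives every individual the payoff $v_L$, where $H_{N_2}<v_L<H_{N_1}$. Consuming $p_n$ gives individual $i$ the payoff $v_{Hi}$, where $v_{Hi}\ge H_{N_1}$ for all $i$. Product similarities are $s_{p_c,p_c}=s_{p_n,p_n}=1$, $s_{p_n,p_c}=s_p\in(0,1)$ and $s_{p_c,p_n}=0$. Individual similarities are $s_{i,i}=1$ and $s_{i,j}=s\in(0,1]$ for $i\neq j$. Dynamics. Time is $t=0,1,2,\dots$. In period $0$ everyone consumes $p_c$, i.e. $D_c^0=\{1,\dots,N\}$ and $D_n^0=\emptyset$. For $t\ge1$, individual $i$'s evaluations are $U_i^t(p_c)=\sum_{t'=0}^{t-1}\sum_{j\in D_c^{t'}} s_{i,j}(v_L-H_i)$ and $U_i^t(p_n)=s_p\,U_i^t(p_c)+\sum_{t'=0}^{t-1}\sum_{j\in D_n^{t'}} s_{i,j}(v_{Hj}-H_i)$.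 These are the sums $\sum s_{i,j}s_{p,p'}(v-H_i)$ over all past consumption cases $(j,p',v)$, one case per individual per past period. Individual $i$ consumes $p_n$ in period $t$ (i.e. $i\in D_n^t$) if $U_i^t(p_n)>U_i^t(p_c)$; otherwise he consumes $p_c$ (i.e. $i\in D_c^t$). Thus $D_c^t$ and $D_n^t$ partition $\{1,\dots,N\}$, and $|D|$ denotes the cardinality of a set $D$. *)

(* Defs.v *)
From HB Require Import structures.
From mathcomp Require Import all_boot all_order all_algebra.
Set Implicit Arguments. Unset Strict Implicit. Unset Printing Implicit Defensive.
Import Order.TTheory GRing.Theory Num.Theory.
Local Open Scope ring_scope.

(* Baseline diffusion model.  Individuals are 'I_N; groups are indexed
   0..G-1 (paper's N_1..N_G), grp i is the group of i, and H k is the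
   aspiration level of group k, so H_i = H (grp i). *)
Section Model.
Variables (R : realFieldType) (N : nat) (G : nat).
Variables (grp : 'I_N -> 'I_G) (H : nat -> R) (vL : R) (vH : 'I_N -> R)
          (sp s : R).

Definition Hi (i : 'I_N) : R := H (grp i).

Definition sim (i j : 'I_N) : R := if i == j then 1 else s.

(* A history is the list [D_n^0; ...; D_n^{t-1}] of past adopter sets;
   D_c^{t'} is the complement of D_n^{t'}. *)
Definition Uc (h : seq {set 'I_N}) (i : 'I_N) : R :=
  \sum_(D <- h) \sum_(j in ~: D) sim i j * (vL - Hi i).

Definition Un (h : seq {set 'I_N}) (i : 'I_N) : R :=
  sp * Uc h i + \sum_(D <- h) \sum_(j in D) sim i j * (vH j - Hi i).

Definition next_Dn (h : seq {set 'I_N}) : {set 'I_N} :=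
  [set i | Uc h i < Un h i].

(* hist t = [D_n^0; ...; D_n^t] *)
Fixpoint hist (t : nat) : seq {set 'I_N} :=
  match t with
  | 0 => [:: set0]
  | t'.+1 => rcons (hist t') (next_Dn (hist t'))
  end.

Definition Dn (t : nat) : {set 'I_N} := nth set0 (hist t) t.
Definition Dc (t : nat) : {set 'I_N} := ~: Dn t.

End Model.

(* Main.v *)
Require Import Defs.
From HB Require Import structures.
From mathcomp Require Import all_boot all_order all_algebra.
From mathcomp Require Import ring lra zify.
Import Order.TTheory GRing.Theory Num.Theory.
Local Open Scope ring_scope.

Section Aux.
Variables (R : realFieldType) (N G : nat) (grp : 'I_N -> 'I_G)
  (H : nat -> R) (vL : R) (vH : 'I_N -> R) (sp s : R).

Let Dn' := Dn grp H vL vH sp s.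
Let hist' := hist grp H vL vH sp s.
Let Hi' := Hi grp H.
Let sim' := @sim R N s.

Definition gg (D : {set 'I_N}) (i : 'I_N) : R :=
  \sum_j (if j \in D then sim' i j * (vH j - Hi' i)
          else (sp - 1) * (sim' i j * (vL - Hi' i))).

Definition FF t i := Un grp H vL vH sp s (hist' t) i - Uc grp H vL s (hist' t) i.

Lemma FF_sum h i : Un grp H vL vH sp s h i - Uc grp H vL s h i = \sum_(D <- h) gg D i.
Proof.
rewrite /Un /Uc.
have -> : forall a b : R, sp * a + b - a = b + (sp - 1) * a by move=> a b; ring.
rewrite mulr_sumr -big_split /=; apply: eq_bigr => D _.
rewrite mulr_sumr /gg [RHS](bigID (fun j => j \in D)) /=.
congr (_ + _).
  by apply: eq_bigr => j ->.
rewrite big_mkcond [RHS]big_mkcond /=; apply: eq_bigr => j _.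
by rewrite in_setC; case: (j \in D).
Qed.

Lemma size_hist t : size (hist' t) = t.+1.
Proof. by elim: t => [|t IH] //=; rewrite /hist' /= size_rcons -/hist' IH. Qed.

Lemma Dn_succ t : Dn' t.+1 = next_Dn grp H vL vH sp s (hist' t).
Proof.
rewrite /Dn' /Dn /= nth_rcons.
have := size_hist t; rewrite /hist' => ->.
by rewrite ltnn eqxx.
Qed.

Lemma FF0 i : FF 0 i = gg set0 i.
Proof. by rewrite /FF FF_sum /hist' /= big_cons big_nil addr0. Qed.

Lemma FFS t i : FF t.+1 i = FF t i + gg (Dn' t.+1) i.
Proof.
rewrite /FF !FF_sum Dn_succ /hist' /= -cats1 big_cat /= big_cons big_nil addr0.
done.
Qed.

Lemma inDnS t i : (i \in Dn' t.+1) = (0 < FF t i).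
Proof. by rewrite Dn_succ inE /FF subr_gt0. Qed.

Lemma Dn0 : Dn' 0 = set0.
Proof. by []. Qed.

Hypothesis sp1 : sp < 1.
Hypothesis s0 : 0 < s.
Hypothesis vHge : forall j i, Hi' i <= vH j.

Lemma sim_ge0 i j : 0 <= sim' i j.
Proof. rewrite /sim' /sim; case: (i == j) => //; exact: ltW. Qed.

Lemma gg_ge0 D i : vL <= Hi' i -> 0 <= gg D i.
Proof.
move=> h; apply: sumr_ge0 => j _.
have := sim_ge0 i j; have := vHge j i.
case: (j \in D) => a b.
  by apply: mulr_ge0 => //; rewrite subr_ge0.
apply: mulr_le0; first by rewrite subr_le0 ltW.
by apply: mulr_ge0_le0 => //; rewrite subr_le0.
Qed.

Lemma gg_mono (D D' : {set 'I_N}) i : Hi' i < vL -> D \subset D' -> gg D i <= gg D' i.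
Proof.
move=> h /subsetP sub; apply: ler_sum => j _.
have := sim_ge0 i j; have := vHge j i.
case jD: (j \in D); first by rewrite (sub _ jD).
case: (j \in D') => a b.
  apply: (@le_trans _ _ 0).
    by apply: mulr_le0_ge0; [rewrite subr_le0 ltW | apply: mulr_ge0 => //; rewrite subr_ge0 ltW].
  by apply: mulr_ge0 => //; rewrite subr_ge0.
done.
Qed.

Lemma FF_le t i : Hi' i < vL -> (forall k, (k < t)%N -> Dn' k \subset Dn' k.+1) ->
  FF t i <= t.+1%:R * gg (Dn' t) i.
Proof.
move=> h; elim: t => [|t IH] mono.
  by rewrite FF0 mul1r.
rewrite FFS.
have le1 : FF t i <= t.+1%:R * gg (Dn' t) i by apply: IH => k kt; apply: mono; lia.
have le2 : gg (Dn' t) i <= gg (Dn' t.+1) i by apply: gg_mono => //; apply: mono.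
have : (0 : R) <= t.+1%:R by rewrite ler0n.
rewrite -[t.+2]addn1 natrD; nra.
Qed.

Lemma mono_all t : Dn' t \subset Dn' t.+1.
Proof.
suff: forall k, (k <= t)%N -> Dn' k \subset Dn' k.+1 by apply.
elim: t => [|t IH] k kt.
  have -> : k = 0%N by lia.
  by rewrite Dn0 sub0set.
case: (ltnP k t.+1) => kt'; first by apply: IH; lia.
have -> : k = t.+1 by lia.
apply/subsetP => i; rewrite !inDnS FFS => hF.
case: (ltP (Hi' i) vL) => hv.
  have := FF_le t i hv (fun k (kl : (k < t)%N) => IH k (ltnW kl)).
  have := gg_mono (Dn' t) (Dn' t.+1) i hv (IH t (leqnn t)).
  have : (0 : R) < t.+1%:R by rewrite ltr0n.
  move=> a b c.
  have gpos : 0 < gg (Dn' t) i.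
    rewrite -(pmulr_rgt0 _ a); exact: lt_le_trans hF c.
  lra.
have := gg_ge0 (Dn' t.+1) i hv; lra.
Qed.

End Aux.

Theorem lemma1 (R : realFieldType) (N G : nat) (grp : 'I_N -> 'I_G)
  (H : nat -> R) (vL : R) (vH : 'I_N -> R) (sp s : R) :
  (2 <= N)%N -> (2 <= G)%N ->
  (forall k : 'I_G, exists i : 'I_N, grp i = k) ->
  (forall k l : nat, (k < l < G)%N -> H l < H k) ->
  H 1%N < vL -> vL < H 0%N ->
  (forall i : 'I_N, H 0%N <= vH i) ->
  0 < sp -> sp < 1 ->
  0 < s -> s <= 1 ->
  (forall t : nat, (1 <= t)%N ->
     Dn grp H vL vH sp s t.-1 \subset Dn grp H vL vH sp s t) /\
  (forall (i : 'I_N) (t t' : nat), (t <= t')%N ->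
     i \in Dn grp H vL vH sp s t -> i \in Dn grp H vL vH sp s t').
Proof.
move=> _ _ _ Hdec _ _ vH0 _ sp1 s0 _.
have vHge : forall j i, Hi grp H i <= vH j.
  move=> j i; apply: le_trans (vH0 j); rewrite /Hi.
  case E: (nat_of_ord (grp i)) => [|k]; first by [].
  apply: ltW; apply: Hdec; rewrite -E ltn_ord andbT; lia.
have mono := @mono_all R N G grp H vL vH sp s sp1 s0 vHge.
split.
  by case=> [|t] //= _; apply: mono.
move=> i t t' le; elim: t' le => [|t' IH] le.
  by have -> : t = 0%N by lia.
case: (ltnP t t'.+1) => h.
  by move=> hi; apply: (subsetP (mono t')); apply: IH => //; lia.
by have -> : t = t'.+1 by lia.
Qed.
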